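(* Let $\boldsymbol\psi\in\mathbb R^n$ with all entries positive and let $\boldsymbol\Sigma$ be a real symmetric positive definite $n\times n$ matrix whose diagonal entries all equal a common constant $\bar\lambda>1$. Let $\lambda_1\ge\dots\ge\lambda_n>0$ be the eigenvalues of $\boldsymbol\Sigma$ with orthonormal eigenvectors $\mathbf u_1,\dots,\mathbf u_n$, and let $k\in\{0,\dots,n\}$ be such that $\lambda_i>\bar\lambda$ for $i\le k$ and $\lambda_i\le\bar\lambda$ for $i>k$. Define $\Omega(\mathbf q)=\boldsymbol\psi^\top\mathbf q-\tfrac12\mathbf q^\top\boldsymbol\Sigma\mathbf q$, $\mathbf q^\ddagger=\tfrac12\boldsymbol\Sigma^{-1}\boldsymbol\psi$, $\mathbf q^*=(\boldsymbol\Sigma+\bar\lambda\mathbf I)^{-1}\boldsymbol\psi$, and $$w_i=\frac{(\lambda_i+3\bar\lambda)(\lambda_i-\bar\lambda)}{\lambda_i(\lambda_i+\bar\lambda)^2}.$$ Then $\Omega(\mathbf q^* )>\Omega(\mathbf q^\ddagger)$ if and only if $$\sum_{i=1}^k|w_i|(\boldsymbol\psi^\top\mathbf u_i)^2>\sum_{i=k+1}^n|w_i|(\boldsymbol\psi^\top\mathbf u_i)^2 .$$ In particular, if $k\ge 1$ and $\boldsymbol\psi\in\operatorname{span}\{\mathbf u_1,\dots,\mathbf u_k\}$, then $\Omega(\mathbf q^* )>\Omega(\mathbf q^\ddagger)$.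
   Context: Interpretation (not needed for the statement): $\mathbf q^\ddagger$ maximizes aggregate profit $\sum_i(\psi_i-\sum_j\sigma_{ij}q_j)q_i$ (monopoly), and $\mathbf q^*$ is the Cournot equilibrium output profile when firm $i$'s profit is $(\psi_i-\sum_j\sigma_{ij}q_j)q_i$. *)

(* Defs.v *)
From HB Require Import structures.
From mathcomp Require Import all_boot all_order all_algebra.
Set Implicit Arguments. Unset Strict Implicit. Unset Printing Implicit Defensive.
Import Order.TTheory GRing.Theory Num.Theory.
Local Open Scope ring_scope.

Definition Omega (R : realFieldType) (n : nat) (psi : 'cV[R]_n)
  (Sigma : 'M[R]_n) (q : 'cV[R]_n) : R :=
  (psi^T *m q) 0 0 - 2^-1 * (q^T *m Sigma *m q) 0 0.

Definition q_dagger (R : realFieldType) (n : nat) (psi : 'cV[R]_n)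
  (Sigma : 'M[R]_n) : 'cV[R]_n := 2^-1 *: (invmx Sigma *m psi).

Definition q_star (R : realFieldType) (n : nat) (psi : 'cV[R]_n)
  (Sigma : 'M[R]_n) (lbar : R) : 'cV[R]_n :=
  invmx (Sigma + lbar%:M) *m psi.

Definition wcoef (R : realFieldType) (lbar li : R) : R :=
  (li + 3 * lbar) * (li - lbar) / (li * (li + lbar) ^+ 2).

Definition dotc (R : realFieldType) (n : nat) (psi u : 'cV[R]_n) : R :=
  (psi^T *m u) 0 0.

(* Main.v *)
Require Import Defs.
From HB Require Import structures.
From mathcomp Require Import all_boot all_order all_algebra.
From mathcomp Require Import ring lra.
Import Order.TTheory GRing.Theory Num.Theory.
Local Open Scope ring_scope.

Lemma SU_lem (R : realFieldType) (n : nat) (Sigma U : 'M[R]_n) (lam : 'I_n -> R) :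
  (forall i : 'I_n, Sigma *m col i U = lam i *: col i U) ->
  Sigma *m U = U *m diag_mx (\row_i lam i).
Proof.
move=> hE; apply/matrixP=> i j; rewrite mul_mx_diag !mxE.
have := congr1 (fun M : 'cV_n => M i 0) (hE j); rewrite !mxE => h.
rewrite mulrC -h; apply: eq_bigr => k _; rewrite !mxE.
by [].
Qed.

Lemma mdiag (R : realFieldType) n m (d : 'rV[R]_n) (A : 'M[R]_(n,m)) :
  diag_mx d *m A = \matrix_(i,j) (d 0 i * A i j).
Proof. exact: mul_diag_mx. Qed.

Lemma inv_gen (R : realFieldType) (n : nat) (M U : 'M[R]_n) (d : 'I_n -> R) :
  U^T *m U = 1%:M -> (forall i, d i != 0) ->
  M *m U = U *m diag_mx (\row_i d i) ->
  invmx M = U *m diag_mx (\row_i (d i)^-1) *m U^T.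
Proof.
move=> hU hd hM.
have hD : diag_mx (\row_i d i) *m diag_mx (\row_i (d i)^-1) = 1%:M.
  apply/matrixP=> i j; rewrite mul_diag_mx !mxE.
  case: eqP => [->|_]; last by rewrite !mulr0n mulr0.
  by rewrite !mulr1n divff.
have hMN : M *m (U *m diag_mx (\row_i (d i)^-1) *m U^T) = 1%:M.
  by rewrite !mulmxA hM -(mulmxA U) hD mulmx1 (mulmx1C hU).
have [hu _] := mulmx1_unit hMN.
rewrite -[LHS]mulmx1 -hMN (mulmxA (invmx M)) mulVmx //.
by rewrite mul1mx.
Qed.

Lemma inv_app (R : realFieldType) (n : nat) (M U : 'M[R]_n) (d : 'I_n -> R) (v : 'cV[R]_n) :
  U^T *m U = 1%:M -> (forall i, d i != 0) ->
  M *m U = U *m diag_mx (\row_i d i) ->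
  invmx M *m v = U *m \col_i ((d i)^-1 * (U^T *m v) i 0).
Proof.
move=> hU hd hM; rewrite (@inv_gen _ _ _ _ _ hU hd hM) -!mulmxA; congr (U *m _).
by apply/matrixP=> i j; rewrite mul_diag_mx !mxE (ord1 j).
Qed.

Lemma omega_lem (R : realFieldType) (n : nat) (psi : 'cV[R]_n) (Sigma U : 'M[R]_n)
   (lam : 'I_n -> R) (y : 'cV[R]_n) :
  U^T *m U = 1%:M -> Sigma *m U = U *m diag_mx (\row_i lam i) ->
  Omega psi Sigma (U *m y) =
  \sum_i ((U^T *m psi) i 0 * y i 0 - 2^-1 * (lam i * y i 0 ^+ 2)).
Proof.
move=> hU hSU; rewrite /Omega.
have e1 : psi^T *m (U *m y) = (U^T *m psi)^T *m y by rewrite trmx_mul trmxK mulmxA.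
have e2 : (U *m y)^T *m Sigma *m (U *m y) = y^T *m (diag_mx (\row_i lam i) *m y).
  by rewrite trmx_mul -!mulmxA (mulmxA Sigma) hSU -mulmxA (mulmxA U^T) hU mul1mx.
rewrite e1 e2; set a := U^T *m psi.
rewrite mul_diag_mx !mxE mulr_sumr -sumrB; apply: eq_bigr => i _.
rewrite !mxE; ring.
Qed.

Lemma dot_lem (R : realFieldType) (n : nat) (psi : 'cV[R]_n) (U : 'M[R]_n) i :
  dotc psi (col i U) = (U^T *m psi) i 0.
Proof. by rewrite /dotc !mxE; apply: eq_bigr => j _; rewrite !mxE mulrC. Qed.

Arguments SU_lem {R n Sigma U lam}.
Arguments inv_gen {R n M U d}.
Arguments inv_app {R n M U d v}.
Arguments omega_lem {R n} psi Sigma {U lam} y.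

Theorem theorem5 (R : realFieldType) (n : nat) (psi : 'cV[R]_n)
  (Sigma : 'M[R]_n) (lbar : R) (lam : 'I_n -> R) (U : 'M[R]_n) (k : nat) :
  (forall i : 'I_n, 0 < psi i 0) ->
  Sigma^T = Sigma ->
  (forall x : 'cV[R]_n, x != 0 -> 0 < (x^T *m Sigma *m x) 0 0) ->
  (forall i : 'I_n, Sigma i i = lbar) ->
  1 < lbar ->
  (forall i j : 'I_n, (i <= j)%N -> lam j <= lam i) ->
  (forall i : 'I_n, 0 < lam i) ->
  U^T *m U = 1%:M ->
  (forall i : 'I_n, Sigma *m col i U = lam i *: col i U) ->
  (k <= n)%N ->
  (forall i : 'I_n, (i < k)%N -> lbar < lam i) ->
  (forall i : 'I_n, (k <= i)%N -> lam i <= lbar) ->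
  (Omega psi Sigma (q_dagger psi Sigma) < Omega psi Sigma (q_star psi Sigma lbar)
   <->
   \sum_(i < n | (i < k)%N) `|wcoef lbar (lam i)| * (dotc psi (col i U)) ^+ 2 >
   \sum_(i < n | (k <= i)%N) `|wcoef lbar (lam i)| * (dotc psi (col i U)) ^+ 2)
  /\
  ((1 <= k)%N ->
   (exists c : 'I_n -> R, psi = \sum_(i < n | (i < k)%N) c i *: col i U) ->
   Omega psi Sigma (q_dagger psi Sigma) < Omega psi Sigma (q_star psi Sigma lbar)).
Proof.
move=> hpsi _ _ _ hlb _ hlam hU hE hkn hlo hhi.
have hSU := SU_lem hE.
have hb : 0 < lbar by lra.
have hl0 : forall i, lam i != 0 by move=> i; rewrite gt_eqF.
have hlb0 : forall i, lam i + lbar != 0.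
  by move=> i; rewrite gt_eqF // addr_gt0.
set a := U^T *m psi.
have hqs : q_star psi Sigma lbar = U *m \col_i ((lam i + lbar)^-1 * a i 0).
  rewrite /q_star (@inv_app _ _ _ U (fun i => lam i + lbar) _ hU) //.
    rewrite mulmxDl hSU mul_scalar_mx -mul_mx_scalar -mulmxDr; congr (U *m _).
    apply/matrixP=> i j; rewrite !mxE; case: eqP => _; rewrite ?mulr1n ?mulr0n ?addr0 //.
have hqd : q_dagger psi Sigma = U *m \col_i (2^-1 * ((lam i)^-1 * a i 0)).
  rewrite /q_dagger (@inv_app _ _ _ U lam _ hU) // scalemxAr; congr (U *m _).
  by apply/matrixP=> i j; rewrite !mxE.
have hdiff : Omega psi Sigma (q_star psi Sigma lbar) - Omega psi Sigma (q_dagger psi Sigma)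
    = 8^-1 * \sum_i wcoef lbar (lam i) * a i 0 ^+ 2.
  rewrite hqs hqd !(omega_lem _ _ _ hU hSU) -sumrB mulr_sumr; apply: eq_bigr => i _.
  rewrite !mxE /wcoef.
  have := hl0 i; have := hlb0 i; move: (lam i) (a i 0) => l x h1 h2.
  by field; rewrite h2 h1.
have da : forall i, dotc psi (col i U) = a i 0 by move=> i; rewrite dot_lem.
have part1 : Omega psi Sigma (q_dagger psi Sigma) < Omega psi Sigma (q_star psi Sigma lbar)
   <->
   \sum_(i < n | (i < k)%N) `|wcoef lbar (lam i)| * (dotc psi (col i U)) ^+ 2 >
   \sum_(i < n | (k <= i)%N) `|wcoef lbar (lam i)| * (dotc psi (col i U)) ^+ 2.
  rewrite -subr_gt0 hdiff pmulr_rgt0 ?invr_gt0 ?ltr0n //.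
  rewrite (bigID (fun i : 'I_n => (i < k)%N)) /= -subr_gt0.
  have -> : \sum_(i < n | (i < k)%N) `|wcoef lbar (lam i)| * dotc psi (col i U) ^+ 2
      = \sum_(i < n | (i < k)%N) wcoef lbar (lam i) * a i 0 ^+ 2.
    apply: eq_bigr => i hi; rewrite da ger0_norm //.
    have := hlo i hi; rewrite /wcoef => h.
    apply: divr_ge0; first by apply: mulr_ge0; lra.
    by apply: mulr_ge0; [lra | apply: exprn_ge0; lra].
  have -> : \sum_(i < n | (k <= i)%N) `|wcoef lbar (lam i)| * dotc psi (col i U) ^+ 2
      = - \sum_(i < n | ~~ (i < k)%N) wcoef lbar (lam i) * a i 0 ^+ 2.
    rewrite -sumrN; apply: eq_big => [i|i hi]; first by rewrite -leqNgt.
    rewrite da ler0_norm ?mulNr //.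
    have := hhi i hi; have := hlam i; rewrite /wcoef => h0 h.
    rewrite mulrC; apply: mulr_ge0_le0.
      by apply/ltW; rewrite invr_gt0; apply: mulr_gt0 => //; apply: exprn_gt0; lra.
    by apply: mulr_ge0_le0; lra.
  by rewrite subr0; split => h; lra.
split => // hk [c hc].
apply/part1.
have ha : forall j : 'I_n, (k <= j)%N -> a j 0 = 0.
  move=> j hj; rewrite /a hc mulmx_sumr summxE; apply: big1 => i hi.
  rewrite -scalemxAr mxE.
  have -> : (U^T *m col i U) j 0 = (U^T *m U) j i.
    by rewrite !mxE; apply: eq_bigr => l _; rewrite !mxE.
  rewrite hU mxE; case: eqP => [hji|]; last by rewrite mulr0n mulr0.
  by move: hi hj; rewrite hji => /leq_trans h /h; rewrite ltnn.
have -> : \sum_(i < n | (k <= i)%N) `|wcoef lbar (lam i)| * dotc psi (col i U) ^+ 2 = 0.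
  by apply: big1 => i hi; rewrite da ha // expr0n mulr0.
rewrite lt_def sumr_ge0 ?andbT; last by move=> i _; rewrite mulr_ge0 // exprn_even_ge0.
apply/eqP => h0.
have hnn : forall i : 'I_n, (i < k)%N ->
    0 <= `|wcoef lbar (lam i)| * dotc psi (col i U) ^+ 2.
  by move=> i _; rewrite mulr_ge0 // exprn_even_ge0.
have hz : forall i : 'I_n, a i 0 = 0.
  move=> i; case: (ltnP i k) => hik; last exact: ha.
  have := psumr_eq0P hnn h0 hik; rewrite da => /eqP.
  rewrite mulf_eq0 normr_eq0 expf_eq0 /= => /orP [/eqP hw | /eqP //].
  have := hlo i hik; have := hlam i; move: hw; rewrite /wcoef => hw h1 h2.
  have : 0 < (lam i + 3 * lbar) * (lam i - lbar) / (lam i * (lam i + lbar) ^+ 2).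
    apply: divr_gt0; first by apply: mulr_gt0; lra.
    by apply: mulr_gt0 => //; apply: exprn_gt0; lra.
  by rewrite hw ltxx.
have ha0 : a = 0 by apply/matrixP => i j; rewrite (ord1 j) hz mxE.
have hp : psi = U *m a by rewrite /a mulmxA (mulmx1C hU) mul1mx.
have hn0 : (0 < n)%N by apply: leq_trans hkn.
have := hpsi (Ordinal hn0); rewrite hp ha0 mulmx0 mxE ltxx //.
Qed.
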